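(* For every $\theta\in\mathbb R$ there exists a unique $\tau^\star=\tau^\star(\theta)\in(-x_u,x_q)$ such that $s_1(\theta,\tau^\star)=s_2(\theta,\tau^\star)$. (The paper calls $\tau^\star$ the equalizing prejudice and $s(\tau^\star):=s_1(\theta,\tau^\star)=s_2(\theta,\tau^\star)$ the equalized score.)
   Context: Setup. Let $Q\in\{0,1\}$ be a random variable with $\mathbb P(Q=1)=\pi\in(0,1)$, and let $(\Theta,\Gamma)$ be a real-valued random vector whose conditional joint density given $Q=1$ is $h_q(\theta,\gamma)$ and given $Q=0$ is $h_u(\theta,\gamma)$, both strictly positive on $\mathbb R^2$ (so $\Theta,\Gamma$ are continuous random variables and the conditional law of $\Gamma$ given $\Theta=\theta$, also given $Q$, has full support). Monotone likelihood ratio assumption: $l(\theta,\gamma)=h_q(\theta,\gamma)/h_u(\theta,\gamma)$ is continuous and strictly increasing in each of $\theta$ and $\gamma$, and for each $\theta$ the map $\gamma\mapsto l(\theta,\gamma)$ has infimum $0$ and supremum $+\infty$. Fix payoffs $x_q>0$, $x_u>0$. For a prejudice level $\tau\in(-x_u,x_q)$ let $A(\tau)=\mathbb 1\{l(\Theta,\Gamma)>\frac{(1-\pi)(x_u+\tau)}{\pi(x_q-\tau)}\}$ (equivalently, with $\kappa(\theta,\gamma)=\mathbb P(Q=1\mid\Theta=\theta,\Gamma=\gamma)$, accept iff $\kappa x_q-(1-\kappa)x_u>\tau$). Define the scores $s_1(\theta,\tau)=\mathbb E[Q\mid\Theta=\theta,A(\tau)=1]$ and $s_2(\theta,\tau)=\mathbb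 E[A(\tau)\mid\Theta=\theta]=\mathbb P(A(\tau)=1\mid\Theta=\theta)$. Write $\phi(\theta)=\mathbb P(Q=1\mid\Theta=\theta)$. *)

(* Defs.v *)
From HB Require Import structures.
From mathcomp Require Import all_boot all_order all_algebra.
From mathcomp Require Import all_classical all_reals all_analysis.
Set Implicit Arguments. Unset Strict Implicit. Unset Printing Implicit Defensive.
Import Order.TTheory GRing.Theory Num.Theory.
Import numFieldNormedType.Exports.
Local Open Scope classical_set_scope.
Local Open Scope ring_scope.

Section Defs.
Variable R : realType.
Local Notation mu := (@lebesgue_measure R).

Definition sec_int (h : R -> R -> R) (th : R) (S : set R) : R :=
  fine (\int[mu]_(g in S) (h th g)%:E)%E.

Definition lr (hq hu : R -> R -> R) (th g : R) : R := hq th g / hu th g.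

Definition thr (pi xq xu tau : R) : R :=
  ((1 - pi) * (xu + tau)) / (pi * (xq - tau)).

(* the set of gammas accepted at (theta, tau): A(tau) = 1 *)
Definition acc (hq hu : R -> R -> R) (pi xq xu th tau : R) : set R :=
  [set g | thr pi xq xu tau < lr hq hu th g].

(* s1(theta,tau) = E[Q | Theta = theta, A(tau) = 1] *)
Definition s1 (hq hu : R -> R -> R) (pi xq xu th tau : R) : R :=
  let A := acc hq hu pi xq xu th tau in
  (pi * sec_int hq th A) /
  (pi * sec_int hq th A + (1 - pi) * sec_int hu th A).

(* s2(theta,tau) = P(A(tau) = 1 | Theta = theta) *)
Definition s2 (hq hu : R -> R -> R) (pi xq xu th tau : R) : R :=
  let A := acc hq hu pi xq xu th tau in
  (pi * sec_int hq th A + (1 - pi) * sec_int hu th A) /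
  (pi * sec_int hq th setT + (1 - pi) * sec_int hu th setT).

End Defs.

(* Main.v *)
Require Import Defs.
From HB Require Import structures.
From mathcomp Require Import all_boot all_order all_algebra.
From mathcomp Require Import all_classical all_reals all_analysis.
From mathcomp Require Import ring lra measurable_realfun.
Import Order.TTheory GRing.Theory Num.Theory.
Import numFieldNormedType.Exports.
Local Open Scope classical_set_scope.
Local Open Scope ring_scope.
Set Implicit Arguments. Unset Strict Implicit. Unset Printing Implicit Defensive.

Notation mEFinP := measurable_EFinP.

Set Default Proof Using "All".
Section Tail.
Variable R : realType.
Local Notation mu := (@lebesgue_measure R).
Variable f : R -> R.
Hypothesis fpos : forall x, 0 < f x.
Hypothesis fint : mu.-integrable setT (EFin \o f).

Let fmeas : measurable_fun setT f.
Proof. by case/integrableP: fint => /mEFinP. Qed.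

Let fintS (A : set R) : measurable A -> mu.-integrable A (EFin \o f).
Proof. by move=> mA; apply: integrableS fint. Qed.

Lemma itv_pos (a b : R) : a < b -> 0 < \int[mu]_(x in `]a, b]) f x.
Proof.
move=> ab.
have ge0 : 0 <= \int[mu]_(x in `]a, b]) f x.
  by apply: Rintegral_ge0 => x _; exact: ltW.
rewrite lt0r ge0 andbT; apply/negP => /eqP H0.
have fin : (\int[mu]_(x in `]a, b]) (f x)%:E)%E \is a fin_num.
  by apply: integrable_fin_num => //; exact: fintS.
have H1 : (\int[mu]_(x in `]a, b]) `|(f x)%:E| = 0)%E.
  transitivity ((fine (\int[mu]_(x in `]a, b]) (f x)%:E))%:E); last first.
    by rewrite /Rintegral in H0; rewrite H0.
  rewrite fineK //; apply: eq_integral => x _; rewrite gee0_abs // lee_fin ltW //.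
have mf : measurable_fun `]a, b] (EFin \o f).
  by apply/mEFinP; exact: measurable_funS fmeas.
have := (@ae_eq_integral_abs _ _ _ mu `]a, b] (measurable_itv _) _ mf).1 H1.
case=> N [mN muN sub].
have : (mu `]a, b] <= mu N)%E.
  apply: le_measure; rewrite ?inE //.
  move=> x xab; apply: sub => /= H; have := H xab.
  by move/eqP; rewrite eqe (gt_eqF (fpos x)).
rewrite muN lebesgue_measure_itv /= lte_fin ab -EFinD lee_fin; lra.
Qed.

Definition Tl (a : R) := \int[mu]_(x in `]a, +oo[) f x.
Definition Tot := \int[mu]_(x in [set: R]) f x.

Lemma Tl_split (a b : R) : a <= b ->
  Tl a = \int[mu]_(x in `]a, b]) f x + Tl b.
Proof.
move=> ab; rewrite /Tl -Rintegral_setU //; last first.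
- apply/disj_set2P; rewrite -subset0 => x [] /=; rewrite !in_itv /= ?andbT => /andP[_ xb] bx.
  by move: (lt_le_trans bx xb); rewrite ltxx.
- by apply: fintS; exact: measurableU.
congr Rintegral; apply/seteqP; split => x /=; rewrite !in_itv /= ?andbT.
- by move=> ax; case: (leP x b) => xb; [left|right]; rewrite ?ax ?xb.
- by case => [/andP[]|] // bx; apply: le_lt_trans bx.
Qed.

Lemma Tl_ge0 a : 0 <= Tl a.
Proof. by apply: Rintegral_ge0 => x _; exact: ltW. Qed.

Lemma Tl_decr a b : a < b -> Tl b < Tl a.
Proof.
move=> ab; rewrite (Tl_split (ltW ab)); have := itv_pos ab; lra.
Qed.

Lemma Tl_pos a : 0 < Tl a.
Proof.
have H : a < a + 1 by rewrite ltrDl ltr01.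
have := Tl_decr H; have := Tl_ge0 (a + 1); lra. Qed.

Lemma Tot_split a : Tot = \int[mu]_(x in `]-oo, a]) f x + Tl a.
Proof.
rewrite /Tot /Tl -Rintegral_setU //; last first.
- apply/disj_set2P; rewrite -subset0 => x [] /=; rewrite !in_itv /= ?andbT => xb bx.
  by move: (lt_le_trans bx xb); rewrite ltxx.
- by apply: fintS; exact: measurableU.
congr Rintegral; apply/seteqP; split => x /=; rewrite !in_itv /= ?andbT //.
by move=> _; case: (leP x a) => xa; [left|right].
Qed.

Lemma Tl_le_Tot a : Tl a <= Tot.
Proof.
rewrite (Tot_split a) lerDr; apply: Rintegral_ge0 => x _; exact: ltW.
Qed.

Lemma Rint_sub (A B : set R) : measurable A -> measurable B -> A `<=` B ->
  \int[mu]_(x in A) f x <= \int[mu]_(x in B) f x.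
Proof.
move=> mA mB AB; rewrite /Rintegral fine_le //.
- by apply: integrable_fin_num => //; exact: fintS.
- by apply: integrable_fin_num => //; exact: fintS.
apply: ge0_subset_integral => //.
- by apply/mEFinP; exact: measurable_funS fmeas.
- by move=> x _; rewrite lee_fin ltW.
Qed.

Lemma Tot_approx e : 0 < e -> exists n : nat,
  Tot - e < \int[mu]_(x in `](- (n%:R)), n%:R]) f x.
Proof.
move=> e0.
have H := @ge0_nondecreasing_set_cvg_integral _ _ _ _ _ mu.
have := H (fun n : nat => [set` Interval (BSide false (1 *- n)) (BSide false (n%:R : R))]).
rewrite bigcup_itvT => /(_ (EFin \o f)) H2.
have Hc : (\int[mu]_(x in `]1 *- i, i%:R]) (EFin \o f) x)%E @[i --> \oo] --> Tot%:E.
  rewrite /Tot /Rintegral fineK; last by apply: integrable_fin_num.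
  apply: H2.
  - move=> n m nm; apply/subsetPset => x /=; rewrite !in_itv /= => /andP[h1 h2].
    apply/andP; split.
      by apply: le_lt_trans h1; rewrite lerN2 ler_nat.
    by apply: (le_trans h2); rewrite ler_nat.
  - by move=> i; exact: measurable_itv.
  - by move=> i; apply/mEFinP; exact: measurable_funS fmeas.
  - by move=> i x _; rewrite lee_fin ltW.
move/fine_cvgP: Hc => [_ Hc].
move/cvgrPdist_lt: Hc => /(_ e e0) [N _ HN].
exists N; have := HN N (leqnn N); rewrite /= ltr_norml => /andP[h1 h2].
have -> : - (N%:R : R) = 1 *- N by [].
rewrite /Rintegral; lra.
Qed.

Lemma Tl_le a b : a <= b -> Tl b <= Tl a.
Proof. by rewrite le_eqVlt => /predU1P[->//|/Tl_decr/ltW]. Qed.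

Lemma Tl_small e : 0 < e -> exists a, Tl a < e.
Proof.
move=> e0; have [n Hn] := Tot_approx e0; exists n%:R.
have := Tot_split n%:R.
have : \int[mu]_(x in `](- (n%:R)), n%:R]) f x <= \int[mu]_(x in `]-oo, n%:R]) f x.
  apply: Rint_sub => // x /=; rewrite !in_itv /= => /andP[].
  by [].
lra.
Qed.

Lemma Tl_big e : 0 < e -> exists a, Tot - e < Tl a.
Proof.
move=> e0; have [n Hn] := Tot_approx e0; exists (- n%:R).
have : \int[mu]_(x in `](- (n%:R)), n%:R]) f x <= Tl (- n%:R).
  apply: Rint_sub => // x /=; rewrite !in_itv /= => /andP[] -> //.
lra.
Qed.

Lemma Tl_lip e : 0 < e -> exists d, (0 < d) /\ (forall x y, x <= y -> y - x < d -> Tl x - Tl y < e).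
Proof.
move=> e0; have [d [d0 Hd]] := integral_normr_continuous fint e0.
exists d; split => // x y xy yxd.
rewrite (Tl_split xy) addrK.
have -> : \int[mu]_(t in `]x, y]) f t = \int[mu]_(t in `]x, y]) `|f t|.
  by apply: eq_Rintegral => t _; rewrite ger0_norm // ltW.
apply: Hd => //; change (mu `]x, y] < d%:E)%E; rewrite lebesgue_measure_itv /= lte_fin.
by case: ifP => _; rewrite ?lte_fin // -EFinD lte_fin.
Qed.

Lemma Tl_cont : continuous Tl.
Proof.
move=> x; apply/cvgrPdist_lt => e e0; have [d [d0 Hd]] := Tl_lip e0.
exists d => //= y; rewrite /ball /= ltr_norml => /andP[h1 h2].
rewrite ltr_norml; case: (leP x y) => xy.
- have := Hd x y xy ltac:(lra); have := Tl_le xy; lra.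
- have := Hd y x (ltW xy) ltac:(lra); have := Tl_le (ltW xy); lra.
Qed.
End Tail.


Section Phi.
Variable R : realType.
Local Notation mu := (@lebesgue_measure R).
Variables (pi : R) (f1 f2 L : R -> R).
Hypothesis hpi : 0 < pi < 1.
Hypothesis f1pos : forall x, 0 < f1 x.
Hypothesis f2pos : forall x, 0 < f2 x.
Hypothesis f1int : mu.-integrable setT (EFin \o f1).
Hypothesis f2int : mu.-integrable setT (EFin \o f2).
Hypothesis hL : forall g, f1 g = L g * f2 g.
Hypothesis Lmono : {mono L : x y / x < y}.

Let Q := Tl f1.
Let U := Tl f2.
Definition Nf a := pi * Q a + (1 - pi) * U a.
Definition Dn := pi * Tot f1 + (1 - pi) * Tot f2.
Definition S1 a := pi * Q a / Nf a.
Definition S2 a := Nf a / Dn.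
Definition phi a := S1 a - S2 a.

Let f1intS (A : set R) : measurable A -> mu.-integrable A (EFin \o f1).
Proof. by move=> mA; apply: integrableS f1int. Qed.
Let f2intS (A : set R) : measurable A -> mu.-integrable A (EFin \o f2).
Proof. by move=> mA; apply: integrableS f2int. Qed.

Lemma Q_pos a : 0 < Q a. Proof. exact: Tl_pos. Qed.
Lemma U_pos a : 0 < U a. Proof. exact: Tl_pos. Qed.

Lemma Nf_pos a : 0 < Nf a.
Proof. have := Q_pos a; have := U_pos a; rewrite /Nf; case/andP: hpi => ? ?; nra. Qed.

Lemma Dn_pos : 0 < Dn.
Proof.
have := Q_pos 0; have := U_pos 0; have := Tl_le_Tot f1pos f1int 0.
have := Tl_le_Tot f2pos f2int 0; rewrite /Dn /Q /U; case/andP: hpi => ? ?; nra.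
Qed.

Lemma S1_mono a b : a <= b -> S1 a <= S1 b.
Proof.
move=> ab.
have Lle : {mono L : x y / x <= y} by move=> x y; rewrite !leNgt Lmono.
set q := \int[mu]_(x in `]a, b]) f1 x.
set u := \int[mu]_(x in `]a, b]) f2 x.
have Qa : Q a = q + Q b by rewrite /Q (Tl_split f1pos f1int ab).
have Ua : U a = u + U b by rewrite /U (Tl_split f2pos f2int ab).
have u0 : 0 <= u by apply: Rintegral_ge0 => x _; exact: ltW.
have qu : q <= L b * u.
  rewrite /u -RintegralZl //; last exact: f2intS.
  apply: le_Rintegral => //; [exact: f1intS| |].
    exact: (integrableZl _ (L b) (f2intS _)).
  move=> x /=; rewrite in_itv /= => /andP[_ xb]; rewrite hL ler_wpM2r ?Lle //.
  exact: ltW.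
have UQ : L b * U b <= Q b.
  rewrite /U /Q /Tl -RintegralZl //; last exact: f2intS.
  apply: le_Rintegral => //; [|exact: f1intS|].
    exact: (integrableZl _ (L b) (f2intS _)).
  move=> x /=; rewrite in_itv /= andbT => bx; rewrite hL ler_wpM2r ?Lle ?ltW //.
have Lb0 : 0 < L b.
  have := hL b; have := f1pos b; have := f2pos b => h2 h1 e.
  by rewrite e in h1; rewrite -(pmulr_lgt0 _ h2).
have key : q * U b <= Q b * u.
  have := U_pos b; nra.
rewrite /S1 ler_pdivrMr ?Nf_pos // mulrAC ler_pdivlMr ?Nf_pos //.
rewrite /Nf Qa Ua; case/andP: hpi => p0 p1.
have k : 0 <= pi * (1 - pi) * (Q b * u - q * U b) by apply: mulr_ge0; nra.
nra.
Qed.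

Lemma S2_decr a b : a < b -> S2 b < S2 a.
Proof.
move=> ab; rewrite /S2 ltr_pM2r ?invr_gt0 ?Dn_pos //.
have := Tl_decr f1pos f1int ab; have := Tl_decr f2pos f2int ab.
rewrite /Nf /Q /U; case/andP: hpi => ? ?; nra.
Qed.

Lemma phi_incr a b : a < b -> phi a < phi b.
Proof.
move=> ab; have := S1_mono (ltW ab); have := S2_decr ab; rewrite /phi; lra.
Qed.

Lemma Nf_cont : continuous Nf.
Proof.
move=> x; apply: (@cvgD _ _ _ _ _ (fun a => pi * Q a) (fun a => (1 - pi) * U a)).
  by apply: cvgMl_tmp; exact: Tl_cont.
by apply: cvgMl_tmp; exact: Tl_cont.
Qed.

Lemma phi_cont : continuous phi.
Proof.
move=> x.
apply: (@cvgB _ _ _ _ _ S1 S2).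
  apply: (@cvgM _ _ _ _ (fun a => pi * Q a) (fun a => (Nf a)^-1)).
    by apply: cvgMl_tmp; exact: Tl_cont.
  by apply: cvgV; [rewrite gt_eqF ?Nf_pos | exact: Nf_cont].
apply: (@cvgMr_tmp _ _ _ _ Nf); exact: Nf_cont.
Qed.

Lemma phi_root : exists a, phi a = 0.
Proof.
case/andP: hpi => p0 p1.
set c := S1 0.
have c0 : 0 < c by rewrite /c /S1 divr_gt0 ?Nf_pos // mulr_gt0 // Q_pos.
have c1 : c < 1.
  rewrite /c /S1 ltr_pdivrMr ?Nf_pos // mul1r /Nf.
  have := U_pos 0; nra.
have D0 := Dn_pos.
have S2lt a : (S2 a < c) = (Nf a < c * Dn) by rewrite /S2 ltr_pdivrMr.
have S2gt a : (c < S2 a) = (c * Dn < Nf a) by rewrite /S2 ltr_pdivlMr.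
have [a1 Ha1] := Tl_small f1pos f1int (mulr_gt0 c0 D0).
have [a2 Ha2] := Tl_small f2pos f2int (mulr_gt0 c0 D0).
pose ahi := Num.max 0 (Num.max a1 a2).
have hi0 : 0 <= ahi by rewrite le_max lexx.
have hi1 : a1 <= ahi by rewrite le_max le_max lexx orbT.
have hi2 : a2 <= ahi by rewrite le_max le_max lexx !orbT.
have phihi : 0 < phi ahi.
  have := S1_mono hi0; rewrite -/c => h1.
  have : S2 ahi < c.
    rewrite S2lt /Nf.
    have h2 : Q ahi < c * Dn by apply: le_lt_trans (Tl_le f1pos f1int hi1) Ha1.
    have h3 : U ahi < c * Dn by apply: le_lt_trans (Tl_le f2pos f2int hi2) Ha2.
    have k1 : 0 < pi * (c * Dn - Q ahi) by rewrite mulr_gt0 // subr_gt0.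
    have k2 : 0 < (1 - pi) * (c * Dn - U ahi) by rewrite mulr_gt0 // subr_gt0.
    lra.
  rewrite /phi; lra.
have e0 : 0 < (1 - c) * Dn by rewrite mulr_gt0 // subr_gt0.
have [b1 Hb1] := Tl_big f1pos f1int e0.
have [b2 Hb2] := Tl_big f2pos f2int e0.
pose alo := Num.min 0 (Num.min b1 b2).
have lo0 : alo <= 0 by rewrite ge_min lexx.
have lo1 : alo <= b1 by rewrite ge_min ge_min lexx orbT.
have lo2 : alo <= b2 by rewrite ge_min ge_min lexx !orbT.
have philo : phi alo < 0.
  have := S1_mono lo0; rewrite -/c => h1.
  have : c < S2 alo.
    rewrite S2gt /Nf.
    have h2 : Tot f1 - (1 - c) * Dn < Q alo by apply: lt_le_trans Hb1 (Tl_le f1pos f1int lo1).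
    have h3 : Tot f2 - (1 - c) * Dn < U alo by apply: lt_le_trans Hb2 (Tl_le f2pos f2int lo2).
    have k1 : 0 < pi * (Q alo - (Tot f1 - (1 - c) * Dn)) by rewrite mulr_gt0 // subr_gt0.
    have k2 : 0 < (1 - pi) * (U alo - (Tot f2 - (1 - c) * Dn)) by rewrite mulr_gt0 // subr_gt0.
    rewrite /Dn in k1 k2 *. lra.
  rewrite /phi; lra.
have loh : alo <= ahi by apply: le_trans lo0 hi0.
have hm : Num.min (phi alo) (phi ahi) <= 0 <= Num.max (phi alo) (phi ahi).
  by rewrite ge_min le_max (ltW philo) (ltW phihi) orbT.
have [x _ Hx] := IVT loh (continuous_subspaceT phi_cont) hm.
by exists x.
Qed.
End Phi.

Unset Implicit Arguments.


Lemma thr_inj (R : realType) (pi xq xu t1 t2 : R) : 0 < pi < 1 ->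
  - xu < t1 < xq -> - xu < t2 < xq -> 0 < xq -> 0 < xu ->
  thr pi xq xu t1 = thr pi xq xu t2 -> t1 = t2.
Proof.
move=> /andP[p0 p1] /andP[a1 b1] /andP[a2 b2] q0 u0; rewrite /thr => /eqP.
rewrite eqr_div; last 2 first.
- by rewrite mulf_neq0 // ?gt_eqF // subr_gt0.
- by rewrite mulf_neq0 // ?gt_eqF // subr_gt0.
move/eqP => E.
have K : (pi * (1 - pi) * (xq + xu)) * (t1 - t2) =
   (1 - pi) * (xu + t1) * (pi * (xq - t2)) - (1 - pi) * (xu + t2) * (pi * (xq - t1)).
  by ring.
move: K; rewrite E subrr => /eqP; rewrite mulf_eq0 => /orP[|].
  move=> /eqP H; have : 0 < pi * (1 - pi) * (xq + xu).
    by rewrite !mulr_gt0 ?subr_gt0 ?addr_gt0.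
  by rewrite H ltxx.
by rewrite subr_eq0 => /eqP.
Qed.

Lemma thr_pos (R : realType) (pi xq xu t : R) : 0 < pi < 1 ->
  - xu < t < xq -> 0 < thr pi xq xu t.
Proof.
move=> /andP[p0 p1] /andP[a b]; rewrite /thr divr_gt0 // mulr_gt0 //; lra.
Qed.

Lemma thr_surj (R : realType) (pi xq xu c : R) : 0 < pi < 1 -> 0 < xq -> 0 < xu ->
  0 < c -> exists t, (- xu < t < xq) /\ thr pi xq xu t = c.
Proof.
move=> /andP[p0 p1] q0 u0 c0.
set D := pi * c + (1 - pi).
have D0 : 0 < D by rewrite /D; nra.
exists ((pi * xq * c - (1 - pi) * xu) / D).
have E1 : xu + (pi * xq * c - (1 - pi) * xu) / D = pi * c * (xq + xu) / D.
  by rewrite /D; field; rewrite gt_eqF.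
have E2 : xq - (pi * xq * c - (1 - pi) * xu) / D = (1 - pi) * (xq + xu) / D.
  by rewrite /D; field; rewrite gt_eqF.
split.
  have h1 : 0 < pi * c * (xq + xu) / D by rewrite divr_gt0 // !mulr_gt0 // addr_gt0.
  have h2 : 0 < (1 - pi) * (xq + xu) / D.
    have p' : 0 < 1 - pi by lra.
    by rewrite divr_gt0 // mulr_gt0 // addr_gt0.
  apply/andP; split; lra.
have p' : 0 < 1 - pi by lra.
have s0 : 0 < xq + xu by rewrite addr_gt0.
rewrite /thr E1 E2; field.
by rewrite !gt_eqF.
Qed.

Theorem mainTheorem1 (R : realType) (pi xq xu : R) (hq hu : R -> R -> R)
  (hpi : 0 < pi < 1) (hxq : 0 < xq) (hxu : 0 < xu)
  (* h_q, h_u are strictly positive joint densities on R^2 *)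
  (hq_pos : forall th g, 0 < hq th g) (hu_pos : forall th g, 0 < hu th g)
  (hq_meas : measurable_fun [set: R * R] (fun p : R * R => hq p.1 p.2))
  (hu_meas : measurable_fun [set: R * R] (fun p : R * R => hu p.1 p.2))
  (hq_dens : (\int[(@lebesgue_measure R \x @lebesgue_measure R)]_p
                 (hq p.1 p.2)%:E = 1)%E)
  (hu_dens : (\int[(@lebesgue_measure R \x @lebesgue_measure R)]_p
                 (hu p.1 p.2)%:E = 1)%E)
  (* conditional densities of Gamma given Theta = theta are defined for every theta *)
  (hq_sec : forall th, (@lebesgue_measure R).-integrable [set: R] (fun g => (hq th g)%:E))
  (hu_sec : forall th, (@lebesgue_measure R).-integrable [set: R] (fun g => (hu th g)%:E))
  (* monotone likelihood ratio assumption *)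
  (l_cont : continuous (fun p : R * R => lr hq hu p.1 p.2))
  (l_incr_th : forall g, {mono (fun th => lr hq hu th g) : x y / x < y})
  (l_incr_g : forall th, {mono (fun g => lr hq hu th g) : x y / x < y})
  (l_inf : forall th c, 0 < c -> exists g, lr hq hu th g < c)
  (l_sup : forall th M, exists g, M < lr hq hu th g)
  (th : R) :
  exists! tau : R, (- xu < tau < xq) /\
    s1 hq hu pi xq xu th tau = s2 hq hu pi xq xu th tau.
Proof.
pose L := fun g => lr hq hu th g.
have hL : forall g, hq th g = L g * hu th g.
  by move=> g; rewrite /L /lr divfK // gt_eqF.
have Lmono : {mono L : x y / x < y} := l_incr_g th.
have Lpos : forall g, 0 < L g by move=> g; rewrite /L /lr divr_gt0.
have Lcont : continuous L.
  move=> g.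
  have pc : {for g, continuous (fun g : R => (th, g))}.
    exact: (cvg_pair (cvg_cst th) cvg_id).
  exact: (continuous_comp pc (l_cont _)).
have f1int := hq_sec th.
have f2int := hu_sec th.
have f1pos := hq_pos th.
have f2pos := hu_pos th.
have Hacc : forall tau a, thr pi xq xu tau = L a ->
    acc hq hu pi xq xu th tau = [set` `]a, +oo[%R].
  move=> tau a E; apply/seteqP; split => x /=; rewrite /acc /= E in_itv /= andbT.
    by rewrite (l_incr_g th).
  by rewrite (l_incr_g th).
have Hphi : forall tau a, thr pi xq xu tau = L a ->
    s1 hq hu pi xq xu th tau - s2 hq hu pi xq xu th tau = phi pi (hq th) (hu th) a.
  move=> tau a E; rewrite /s1 /s2 /= (Hacc tau a E).
  by [].
have [a0 Ha0] := phi_root hpi f1pos f2pos f1int f2int hL Lmono.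
have [tau [Htau Etau]] := @thr_surj R pi xq xu _ hpi hxq hxu (Lpos a0).
exists tau; split.
  split => //; apply/eqP; rewrite -subr_eq0; apply/eqP.
  by rewrite (Hphi tau a0 Etau).
move=> t' [Ht' E'].
have c0 := @thr_pos R pi xq xu t' hpi Ht'.
have [g1 Hg1] := l_inf th _ c0.
have [g2 Hg2] := l_sup th (thr pi xq xu t').
have g12 : g1 <= g2.
  apply: ltW; rewrite -(l_incr_g th); exact: lt_trans Hg1 Hg2.
have hm : Num.min (L g1) (L g2) <= thr pi xq xu t' <= Num.max (L g1) (L g2).
  by rewrite ge_min le_max (ltW Hg1) (ltW Hg2) orbT.
have [a' _ Ha'] := IVT g12 (continuous_subspaceT Lcont) hm.
have Pa' : phi pi (hq th) (hu th) a' = 0.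
  by rewrite -(Hphi t' a' (esym Ha')) E' subrr.
have aa : a' = a0.
  have := phi_incr hpi f1pos f2pos f1int f2int hL Lmono.
  move=> inc; case: (ltgtP a' a0) => // h.
  - by have := inc _ _ h; rewrite Pa' Ha0 ltxx.
  - by have := inc _ _ h; rewrite Pa' Ha0 ltxx.
apply: (@thr_inj R pi xq xu _ _ hpi Htau Ht' hxq hxu).
by rewrite Etau -Ha' aa.
Qed.
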